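(* For every graph $G$ on $n\ge 1$ vertices the following are equivalent: (a) $G$ belongs to CBU; (b) $G$ admits a homogeneous arc labeling; (c) $G$ is (isomorphic to) a subgraph of a graph $H_m^t$ obtained from the shift graph $H_m$ by iteratively adding $t$ false twins, for some values $m,t$ with $m+t\le n+1$; (d) $G$ belongs to $(2n-1)$-CBU.
   Context: Let $e_1,\ldots,e_d$ be the standard basis of $\mathbb{R}^d$. For $d\ge 1$, a graph belongs to $d$-CBU if one can assign to each vertex an axis-parallel box (product of $d$ closed intervals of positive length) in $\mathbb{R}^d$ such that the boxes have pairwise disjoint interiors, two distinct vertices are adjacent iff their boxes intersect, and any two intersecting boxes intersect in a $(d-1)$-dimensional box orthogonal to $e_1$. CBU is the union of $d$-CBU over all $d\ge 1$. A homogeneous arc labeling of $G$ is an acyclic orientation of $G$ together with a real label on each arc such that for every vertex all its outgoing arcs have the same label, all its incoming arcs have the same label, and the label of its incoming arcs is smaller than the label of its outgoing arcs. The shift graph $H_m$ has vertices the pairs $(i,j)$ with $1\le i<j\le m$, with $(i,j)$ and $(k,l)$ adjacent iff $j=k$ or $l=i$. Adding a false twin of a vertex $v$ means adding a new vertex $v'$ with $N(v')=N(v)$. *)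

(* Defs.v *)
From HB Require Import structures.
From mathcomp Require Import all_boot all_order all_algebra.
From mathcomp Require Import reals.
Set Implicit Arguments. Unset Strict Implicit. Unset Printing Implicit Defensive.
Import Order.TTheory GRing.Theory Num.Theory.
Local Open Scope ring_scope.

Definition simple_graph (V : finType) (adj : rel V) : Prop :=
  (forall u v, adj u v = adj v u) /\ (forall v, ~~ adj v v).

Section Boxes.
Variables (R : realType) (d : nat).

Definition in_box (lo hi : 'I_d -> R) (x : 'I_d -> R) : Prop :=
  forall i, lo i <= x i <= hi i.

Definition in_box_interior (lo hi : 'I_d -> R) (x : 'I_d -> R) : Prop :=
  forall i, lo i < x i < hi i.
End Boxes.

(* G is in d-CBU: coordinate "e_1" is the coordinate of index 0. *)
Definition dCBU (R : realType) (d : nat) (V : finType) (adj : rel V) : Prop :=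
  exists lo hi : V -> 'I_d -> R,
    (forall v i, lo v i < hi v i) /\
    (forall u v, u != v ->
       ~ (exists x, in_box_interior (lo u) (hi u) x /\ in_box_interior (lo v) (hi v) x)) /\
    (forall u v, u != v ->
       (adj u v <-> exists x, in_box (lo u) (hi u) x /\ in_box (lo v) (hi v) x)) /\
    (* intersecting boxes meet in a (d-1)-dimensional box orthogonal to e_1 *)
    (forall u v, u != v ->
       (exists x, in_box (lo u) (hi u) x /\ in_box (lo v) (hi v) x) ->
       exists lo' hi' : 'I_d -> R,
         (forall x, (in_box (lo u) (hi u) x /\ in_box (lo v) (hi v) x) <-> in_box lo' hi' x) /\
         (forall i : 'I_d, nat_of_ord i = 0%N -> lo' i = hi' i) /\
         (forall i : 'I_d, nat_of_ord i <> 0%N -> lo' i < hi' i)).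

Definition CBU (R : realType) (V : finType) (adj : rel V) : Prop :=
  exists d : nat, (1 <= d)%N /\ dCBU R d adj.

Definition orientation (V : finType) (adj : rel V) (o : rel V) : Prop :=
  (forall u v, o u v -> adj u v) /\
  (forall u v, adj u v -> (o u v && ~~ o v u) || (o v u && ~~ o u v)).

Definition acyclic_rel (V : finType) (o : rel V) : Prop :=
  forall u v, o u v -> ~~ connect o v u.

Definition homogeneous_arc_labeling (R : realType) (V : finType) (adj : rel V) : Prop :=
  exists (o : rel V) (lab : V -> V -> R),
    orientation adj o /\ acyclic_rel o /\
    (forall v w w', o v w -> o v w' -> lab v w = lab v w') /\
    (forall v w w', o w v -> o w' v -> lab w v = lab w' v) /\
    (forall v w w', o w v -> o v w' -> lab w v < lab v w').

Definition shift_vertex (m : nat) : predArgType :=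
  {p : 'I_m.+1 * 'I_m.+1 | (0 < p.1)%N && (p.1 < p.2)%N}.

Definition shift_adj (m : nat) : rel (shift_vertex m) :=
  fun x y => ((val x).2 == (val y).1) || ((val y).2 == (val x).1).

(* add a false twin (the new vertex None) of the vertex v *)
Definition add_false_twin (W : finType) (a : rel W) (v : W) : rel (option W) :=
  fun x y => a (odflt v x) (odflt v y).

Inductive twins_iter (W0 : finType) (a0 : rel W0) : nat -> forall W : finType, rel W -> Prop :=
| twins_iter0 : twins_iter a0 0 a0
| twins_iterS (t : nat) (W : finType) (a : rel W) (v : W) :
    twins_iter a0 t a -> twins_iter a0 t.+1 (add_false_twin a v).

(* G is isomorphic to a (not necessarily induced) subgraph of H *)
Definition subgraph_of (V W : finType) (adj : rel V) (b : rel W) : Prop :=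
  exists f : V -> W, injective f /\ (forall u v, adj u v -> b (f u) (f v)).

(* Main.v *)
Require Import Defs.
From HB Require Import structures.
From mathcomp Require Import all_boot all_order all_algebra.
From mathcomp Require Import reals.
From mathcomp Require Import zify ring lra.
Import Order.TTheory GRing.Theory Num.Theory.


Section Helpers.
Local Open Scope ring_scope.

Lemma potential_acyclic (R : realType) (V : finType) (o : rel V) (phi : V -> R) :
  (forall u v, o u v -> phi u < phi v) -> acyclic_rel o.
Proof.
move=> Hphi u v ouv; apply/negP => /connectP [p].
have key : forall x p, path o x p -> phi x <= phi (last x p).
  move=> x q; elim: q x => [|y q IH] x /=; first by [].
  move=> /andP [oxy pq]; apply: le_trans (IH _ pq); exact: ltW (Hphi _ _ oxy).
move=> /key H e; rewrite -e in H.
by have := lt_le_trans (Hphi _ _ ouv) H; rewrite ltxx.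
Qed.

Lemma twins_pairs (m t : nat) (W : finType) (b : rel W) :
  twins_iter (@shift_adj m) t b ->
  exists p : W -> nat * nat, (forall x, ((p x).1 < (p x).2)%N) /\
    (forall x y, b x y -> ((p x).2 == (p y).1) || ((p y).2 == (p x).1)).
Proof.
elim=> [|t' W' a v _ [p [Hp1 Hp2]]].
  exists (fun x => (nat_of_ord (val x).1, nat_of_ord (val x).2)); split.
    by move=> x /=; case/andP: (valP x).
  by move=> x y.
exists (fun x => p (odflt v x)); split; first by move=> x; apply: Hp1.
by move=> x y; apply: Hp2.
Qed.

Lemma c_to_b (R : realType) (V : finType) (adj : rel V) m t (W : finType) (b : rel W) :
  simple_graph adj ->
  twins_iter (@shift_adj m) t b -> subgraph_of adj b -> homogeneous_arc_labeling R adj.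
Proof.
move=> [Hsym _] /twins_pairs [p [Hp1 Hp2]] [f [finj Hf]].
pose o := fun u v => adj u v && ((p (f u)).2 == (p (f v)).1).
exists o, (fun u v => ((p (f u)).2)%:R : R).
have arc : forall u v, o u v -> ((p (f u)).1 < (p (f v)).1)%N.
  move=> u v /andP [_ /eqP <-]; exact: Hp1.
split; [split|split; [|split; [|split]]].
- by move=> u v /andP [].
- move=> u v auv; have auv' : adj v u by rewrite Hsym.
  rewrite /o auv auv' /=.
  have nb : ~~ (((p (f u)).2 == (p (f v)).1) && ((p (f v)).2 == (p (f u)).1)).
    apply/negP=> /andP [/eqP e /eqP e2].
    have := Hp1 (f u); have := Hp1 (f v); rewrite e e2; lia.
  move: nb (Hp2 _ _ (Hf _ _ auv)).
  by case: ((p (f u)).2 == (p (f v)).1); case: ((p (f v)).2 == (p (f u)).1).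
- apply: (@potential_acyclic R V o (fun u => ((p (f u)).1)%:R)) => u v.
  by move/arc; rewrite ltr_nat.
- by [].
- by move=> v w w' /andP [_ /eqP ->] /andP [_ /eqP ->].
- move=> v w w' /andP [_ /eqP ->] _; rewrite ltr_nat; exact: Hp1.
Qed.

End Helpers.


Section H2.
Local Open Scope ring_scope.

Lemma cbu_to_hal (R : realType) (V : finType) (adj : rel V) :
  simple_graph adj -> CBU R adj -> homogeneous_arc_labeling R adj.
Proof.
move=> [Hsym Hirr] [[|d] [//= _ [lo [hi [Hpos [Hint [Hadj Hdeg]]]]]]].
pose i0 := (ord0 : 'I_d.+1).
have key : forall u v, adj u v -> (hi u i0 == lo v i0) || (hi v i0 == lo u i0).
  move=> u v auv.
  have neq : u != v by apply/eqP=> e; move: auv; rewrite e (negbTE (Hirr v)).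
  have [x [xu xv]] := (Hadj u v neq).1 auv.
  have [lo' [hi' [Heq [Hd _]]]] := Hdeg u v neq (ex_intro _ x (conj xu xv)).
  pose a := Num.max (lo u i0) (lo v i0); pose b := Num.min (hi u i0) (hi v i0).
  have pt : forall c, a <= c <= b -> c = lo' i0.
    move=> c /andP [ac cb].
    pose y := fun j => if j == i0 then c else x j.
    have : in_box lo' hi' y.
      apply/Heq; split=> j; rewrite /y; case: eqP => [->|_]; try exact: xu j; try exact: xv j.
        move: ac cb; rewrite /a /b ge_max le_min => /andP [h1 h2] /andP [h3 h4].
        by rewrite h1 h3.
      move: ac cb; rewrite /a /b ge_max le_min => /andP [h1 h2] /andP [h3 h4].
      by rewrite h2 h4.
    move=> /(_ i0); rewrite /y eqxx -(Hd i0 erefl) => /andP [h1 h2].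
    by apply: le_anti; rewrite h1 h2.
  have ab : a <= b.
    have := xu i0; have := xv i0 => /andP [h1 h2] /andP [h3 h4].
    apply: (@le_trans _ _ (x i0)); first by rewrite /a ge_max h1 h3.
    by rewrite /b le_min h2 h4.
  have e1 : a = lo' i0 by apply: pt; rewrite lexx ab.
  have e2 : b = lo' i0 by apply: pt; rewrite lexx ab.
  have eab : a = b by rewrite e1 e2.
  clear e1 e2 pt.
  move: eab; rewrite /a /b.
  have p1 := Hpos u i0; have p2 := Hpos v i0.
  case: (leP (lo u i0) (lo v i0)) => h1; case: (leP (hi u i0) (hi v i0)) => h2 e.
  - by rewrite e eqxx.
  - by move: p2; rewrite e ltxx.
  - by move: p1; rewrite e ltxx.
  - by rewrite e eqxx orbT.
pose o := fun u v => adj u v && (hi u i0 == lo v i0).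
exists o, (fun u v => hi u i0).
have arc : forall u v, o u v -> lo u i0 < lo v i0.
  move=> u v /andP [_ /eqP <-]; exact: Hpos.
split; [split|split; [|split; [|split]]].
- by move=> u v /andP [].
- move=> u v auv.
  have auv' : adj v u by rewrite Hsym.
  rewrite /o auv auv' /=.
  have nb : ~~ ((hi u i0 == lo v i0) && (hi v i0 == lo u i0)).
    apply/negP=> /andP [/eqP e /eqP e2].
    have p1 := Hpos u i0; have p2 := Hpos v i0.
    by move: p1; rewrite e -e2 => /lt_trans /(_ p2); rewrite ltxx.
  move: nb (key _ _ auv).
  by case: (hi u i0 == lo v i0); case: (hi v i0 == lo u i0).
- exact: (@potential_acyclic R V o (fun u => lo u i0)).
- by [].
- by move=> v w w' /andP [_ /eqP ->] /andP [_ /eqP ->].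
- move=> v w w' /andP [_ /eqP ->] _; exact: Hpos.
Qed.

End H2.


Section H3.
Local Open Scope ring_scope.

Lemma hal_intervals (R : realType) (V : finType) (adj : rel V) :
  homogeneous_arc_labeling R adj ->
  exists (inn out : V -> R) (mu : R),
    (forall v, inn v < out v) /\
    (forall u v, adj u v -> out u = inn v \/ out v = inn u) /\
    (forall v, inn v = mu \/ exists w, inn v = out w).
Proof.
move=> [o [lab [[Hoa Hor] [_ [Hout [Hin Hio]]]]]].
pose Ssum := \sum_(u : V) \sum_(w : V) lab u w ^+ 2.
pose mu := - Ssum - 1.
have mu_lt : forall u w, mu < lab u w.
  move=> u w.
  have h1 : lab u w ^+ 2 <= \sum_(w' : V) lab u w' ^+ 2.
    by rewrite (bigD1 w) //= lerDl sumr_ge0 // => i _; exact: sqr_ge0.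
  have h2 : \sum_(w' : V) lab u w' ^+ 2 <= Ssum.
    rewrite /Ssum [X in _ <= X](bigD1 u) //= lerDl sumr_ge0 // => i _.
    by rewrite sumr_ge0 // => k _; exact: sqr_ge0.
  have h3 : lab u w ^+ 2 <= Ssum := le_trans h1 h2.
  rewrite /mu; nra.
pose inn v := if [pick w | o w v] is Some w then lab w v else mu.
pose out v := if [pick w | o v w] is Some w then lab v w else inn v + 1.
have arc : forall u v, o u v -> out u = lab u v /\ inn v = lab u v.
  move=> u v ouv; rewrite /out /inn; split.
    case: pickP => [w ouw|none]; first exact: Hout.
    by have := none v; rewrite ouv.
  case: pickP => [w owv|none]; first exact: Hin.
  by have := none u; rewrite ouv.
exists inn, out, mu; split; [|split].
- move=> v; rewrite /out.
  case: pickP => [w ovw|_]; last by rewrite ltrDl ltr01.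
  rewrite /inn; case: pickP => [w' ow'v|_]; first exact: Hio.
  exact: mu_lt.
- move=> u v /Hor; case ouv: (o u v) => /=.
    by move=> _; left; rewrite (arc _ _ ouv).1 (arc _ _ ouv).2.
  case ovu: (o v u) => //= _.
  by right; rewrite (arc _ _ ovu).1 (arc _ _ ovu).2.
- move=> v; case: (pickP (fun w => o w v)) => [w owv|none].
    by right; exists w; rewrite (arc _ _ owv).1 (arc _ _ owv).2.
  left; rewrite /inn; case: pickP => [w' h|//].
  by have := none w'; rewrite h.
Qed.

Lemma box_meet (R : realType) d (l1 h1 l2 h2 : 'I_d -> R) x :
  in_box l1 h1 x /\ in_box l2 h2 x <->
  in_box (fun i => Num.max (l1 i) (l2 i)) (fun i => Num.min (h1 i) (h2 i)) x.
Proof.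
split.
  move=> [b1 b2] i; have /andP [p1 p2] := b1 i; have /andP [p3 p4] := b2 i.
  by rewrite ge_max le_min p1 p2 p3 p4.
move=> b; split=> i; have := b i; rewrite ge_max le_min.
  by case/andP=> /andP [-> _] /andP [-> _].
by case/andP=> /andP [_ ->] /andP [_ ->].
Qed.

End H3.


Section H4.
Local Open Scope ring_scope.

Lemma int_to_dcbu (R : realType) (V : finType) (adj : rel V) (inn out : V -> R) :
  simple_graph adj -> (0 < #|V|)%N ->
  (forall v, inn v < out v) -> (forall u v, adj u v -> out u = inn v \/ out v = inn u) ->
  dCBU R (2 * #|V| - 1)%N adj.
Proof.
move=> [Hsym Hirr] n0 Hio Htouch.
set d := (2 * #|V| - 1)%N.
pose rk := fun v : V => nat_of_ord (enum_rank v).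
pose isc := fun (i : nat) (v : V) => (rk v).+1 == i.
pose lo := fun v (i : 'I_d) => (if (i : nat) == 0%N then inn v else
   if isc i v then 0 else if [exists c, isc i c && adj c v] then 1 else 3) : R.
pose hi := fun v (i : 'I_d) => (if (i : nat) == 0%N then out v else
   if isc i v then 2 else 4) : R.
have isc_uniq : forall i c c', isc i c -> isc i c' -> c = c'.
  rewrite /isc => i c c' /eqP <- /eqP [] e.
  by apply: enum_rank_inj; apply: val_inj.
have Hpos : forall v i, lo v i < hi v i.
  move=> v i; rewrite /lo /hi; case: ifP => _; first exact: Hio.
  case: ifP => _; first lra.
  case: ifP => _; lra.
have lo_le3 : forall u (i : 'I_d), (i : nat) != 0%N -> lo u i <= 3.
  move=> u i /negbTE i0; rewrite /lo i0.
  case: ifP => _; first lra. case: ifP => _; lra.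
have hi_eq : forall v (i : 'I_d), (i : nat) != 0%N -> hi v i = if isc i v then 2 else 4.
  by move=> v i /negbTE i0; rewrite /hi i0.
have lo_le1 : forall u v (i : 'I_d), (i : nat) != 0%N -> adj v u -> isc i v -> lo u i <= 1.
  move=> u v i /negbTE i0 avu civ; rewrite /lo i0.
  case: ifP => _; first lra.
  have -> : [exists c, isc i c && adj c u] by apply/existsP; exists v; rewrite civ avu.
  lra.
have cross : forall u v (i : 'I_d), (i : nat) != 0%N -> adj v u -> lo u i < hi v i.
  move=> u v i i0 avu; rewrite hi_eq //; case: ifP => c.
    have := lo_le1 u v i i0 avu c; lra.
  have := lo_le3 u i i0; lra.
have d0 : (0 < d)%N by rewrite /d; lia.
pose i0 := Ordinal d0.
have sep : forall u v, u != v -> ~~ adj u v -> forall x,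
    in_box (lo u) (hi u) x -> in_box (lo v) (hi v) x -> False.
  move=> u v neq nadj x bu bv.
  have c2 : (2 <= #|V|)%N by have := cards2 u v; rewrite neq => <-; exact: max_card.
  have rku : (rk u < #|V|)%N by exact: ltn_ord.
  have rkn : ((rk u).+1 < d)%N by move: rku c2; rewrite /d; lia.
  pose i := Ordinal rkn.
  have ciu : isc i u by rewrite /isc.
  have nciv : ~~ isc i v by apply/negP => /(isc_uniq _ _ _ ciu) e; move: neq; rewrite e eqxx.
  have nex : ~~ [exists c, isc i c && adj c v].
    apply/negP => /existsP [c /andP [cc acv]].
    by move: acv; rewrite -(isc_uniq _ _ _ ciu cc) (negbTE nadj).
  have := bu i; have := bv i; rewrite /lo /hi /= ciu (negbTE nciv) (negbTE nex).
  move=> /andP [h1 h2] /andP [h3 h4]; lra.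
pose L := fun u v (i : 'I_d) => Num.max (lo u i) (lo v i).
pose H := fun u v (i : 'I_d) => Num.min (hi u i) (hi v i).
have LH0 : forall u v, adj u v -> forall i : 'I_d, (i : nat) = 0%N -> L u v i = H u v i.
  move=> u v auv i ie; rewrite /L /H /lo /hi ie /=.
  have hu := Hio u; have hv := Hio v.
  case: (Htouch u v auv) => e; case: leP => h1; case: leP => h2; lra.
have LHi : forall u v, adj u v -> forall i : 'I_d, (i : nat) <> 0%N -> L u v i < H u v i.
  move=> u v auv i /eqP ine; rewrite /L /H lt_min !gt_max !Hpos /=.
  by rewrite !cross // Hsym.
exists lo, hi; split; first exact: Hpos.
split; [|split].
- move=> u v neq [x [iu iv]]; case: (boolP (adj u v)) => a; last first.
    apply: (sep u v neq a x).
      by move=> i; have /andP [h1 h2] := iu i; rewrite !ltW.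
    by move=> i; have /andP [h1 h2] := iv i; rewrite !ltW.
  have := iu i0; have := iv i0; rewrite /lo /hi /=.
  have hu := Hio u; have hv := Hio v.
  case: (Htouch u v a) => e /andP [h1 h2] /andP [h3 h4]; lra.
- move=> u v neq; split.
    move=> a; exists (L u v); apply/box_meet => i.
    rewrite lexx /=; case: (eqVneq (i : nat) 0%N) => [e|ne].
      by rewrite (LH0 u v a i e).
    by apply: ltW; apply: LHi => //; apply/eqP.
  move=> [x [bu bv]]; case: (boolP (adj u v)) => // a.
  by exfalso; apply: (sep u v neq a x).
- move=> u v neq [x [bu bv]].
  have a : adj u v.
    by case: (boolP (adj u v)) => // a; exfalso; apply: (sep u v neq a x).
  exists (L u v), (H u v); split; first by move=> y; apply: box_meet.
  split; first exact: LH0.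
  exact: LHi.
Qed.

End H4.


Section H5.
Local Open Scope ring_scope.

Lemma int_to_shift (R : realType) (V : finType) (adj : rel V) (inn out : V -> R) (mu : R) :
  (forall v, inn v < out v) -> (forall u v, adj u v -> out u = inn v \/ out v = inn u) ->
  (forall v, inn v = mu \/ exists w, inn v = out w) ->
  exists m (g : V -> shift_vertex m), (forall u v, adj u v -> shift_adj (g u) (g v)) /\
    (m <= #|g @: [set: V]| + 1)%N.
Proof.
move=> Hio Htouch Hmu.
pose s := sort <=%R (undup ([seq inn v | v <- enum V] ++ [seq out v | v <- enum V])).
pose m := size s.
have s_uniq : uniq s by rewrite sort_uniq undup_uniq.
have s_sorted : sorted <=%R s by apply: sort_sorted; exact: le_total.
have memS : forall x, (x \in s) = (x \in [seq inn v | v <- enum V] ++ [seq out v | v <- enum V]).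
  by move=> x; rewrite mem_sort mem_undup.
have inn_s : forall v, inn v \in s.
  by move=> v; rewrite memS mem_cat map_f // mem_enum.
have out_s : forall v, out v \in s.
  by move=> v; rewrite memS mem_cat orbC map_f // mem_enum.
have rk_lt : forall x y, x \in s -> y \in s -> x < y -> (index x s < index y s)%N.
  move=> x y xs ys xy; rewrite ltnNge; apply/negP => h.
  have := sorted_leq_index le_trans lexx s_sorted y x ys xs h.
  by rewrite leNgt xy.
have rk_m : forall x, x \in s -> ((index x s).+1 < m.+1)%N.
  by move=> x xs; rewrite ltnS index_mem.
have gP : forall v, (0 < @inord m (index (inn v) s).+1)%N &&
                    (@inord m (index (inn v) s).+1 < @inord m (index (out v) s).+1)%N.
  move=> v; rewrite !inordK ?rk_m //= ltnS.
  exact: rk_lt.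
pose g := fun v => (exist _ (@inord m (index (inn v) s).+1, @inord m (index (out v) s).+1) (gP v)
                    : shift_vertex m).
exists m, g; split.
  move=> u v auv; rewrite /shift_adj /=.
  by case: (Htouch u v auv) => ->; rewrite eqxx ?orbT.
pose Q := [set (val y).2 | y in g @: [set: V]].
have QC : (#|Q| <= #|g @: [set: V]|)%N by apply: leq_imset_card.
have sub : [set~ (ord0 : 'I_m.+1)] \subset (@inord m (index mu s).+1) |: Q.
  apply/subsetP => i; rewrite !inE => i0.
  have ip : (0 < i)%N by rewrite lt0n.
  have km : (i.-1 < m)%N by have := ltn_ord i; lia.
  pose x := nth 0 s i.-1.
  have xs : x \in s by apply: mem_nth.
  have ix : i = @inord m (index x s).+1.
    by apply: val_inj; rewrite /= inordK ?rk_m // index_uniq // prednK.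
  have inQ : forall w, x = out w -> i \in Q.
    move=> w e; apply/imsetP; exists (g w); first by apply: imset_f; rewrite inE.
    by rewrite /= ix e.
  move: xs; rewrite memS mem_cat => /orP [] /mapP [v _ e].
    case: (Hmu v) => [e2|[w e2]].
      by rewrite ix e e2 eqxx.
    by rewrite (inQ w) ?orbT // e e2.
  by rewrite (inQ v) ?orbT.
have := subset_leq_card sub; rewrite cardsC1 card_ord cardsU1 /=.
by move: QC; case: (_ \notin _) => /=; lia.
Qed.

End H5.


Lemma twins_embed_aux (W0 : finType) (a0 : rel W0) t : forall (V : finType) (g : V -> W0),
  (0 < #|V|)%N -> (#|V| <= #|g @: [set: V]| + t)%N ->
  exists (W : finType) (b : rel W) (pi : W -> W0) (f : V -> W),
    twins_iter a0 t b /\ (forall x y, b x y = a0 (pi x) (pi y)) /\ injective f /\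
    (forall x, pi (f x) = g x).
Proof.
elim: t => [|t IH] V g V0 Hc.
  have Hle : (#|g @: [set: V]| <= #|[set: V]|)%N by apply: leq_imset_card.
  have Heq : #|g @: [set: V]| == #|[set: V]|.
    by rewrite eqn_leq Hle /=; move: Hc; rewrite cardsT addn0.
  have /imset_injP Hinj := Heq.
  exists W0, a0, id, g; split; first exact: twins_iter0.
  split; first by [].
  split; last by [].
  by move=> x y e; apply: Hinj; rewrite ?inE.
have [x0 _] : exists x0 : V, x0 \in V by apply/card_gt0P.
case: (boolP (#|g @: [set: V]| == #|[set: V]|)) => Heq.
  have Hc' : (#|V| <= #|g @: [set: V]| + t)%N by rewrite (eqP Heq) cardsT leq_addr.
  have [W [b [pi [f [Hti [Hb [finj Hpi]]]]]]] := IH V g V0 Hc'.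
  exists (option W), (add_false_twin b (f x0)), (fun x => pi (odflt (f x0) x)),
    (fun x => Some (f x)).
  split; first exact: twins_iterS.
  split; first by move=> x y; rewrite /add_false_twin Hb.
  split; last by [].
  by move=> x y [] /finj.
have Hn : ~ {in [set: V] &, injective g} by move/imset_injP => H; move: Heq; rewrite H.
have [u [u' [nu e]]] : exists u u', u != u' /\ g u = g u'.
  have : [exists u, exists u', (u != u') && (g u == g u')].
    case: (boolP [exists u, exists u', (u != u') && (g u == g u')]) => // /negP H.
    exfalso; apply: Hn => x y _ _ exy; case: (eqVneq x y) => // ne.
    by exfalso; apply: H; apply/existsP; exists x; apply/existsP; exists y; rewrite ne exy eqxx.
  by case/existsP => u /existsP [u' /andP [h1 /eqP h2]]; exists u, u'.
pose V' : finType := {x : V | x != u}.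
pose g' := fun x : V' => g (val x).
have cV' : #|V'| = #|V|.-1 by exact: (etrans (card_sig _) (cardC1 u)).
have u'P : u' != u by rewrite eq_sym.
pose u'' := (exist _ u' u'P : V').
have sub : g @: [set: V] \subset g' @: [set: V'].
  apply/subsetP => y /imsetP [x _ ->].
  case: (eqVneq x u) => [->|xu].
    by rewrite e; apply/imsetP; exists u''; rewrite ?inE.
  by apply/imsetP; exists (exist _ x xu : V'); rewrite ?inE.
have Hc2 := subset_leq_card sub.
have V'0 : (0 < #|V'|)%N by apply/card_gt0P; exists u''.
have Hc' : (#|V'| <= #|g' @: [set: V']| + t)%N.
  move: Hc Hc2; rewrite cV'; lia.
have [W [b [pi [f [Hti [Hb [finj Hpi]]]]]]] := IH V' g' V'0 Hc'.
exists (option W), (add_false_twin b (f u'')), (fun x => pi (odflt (f u'') x)),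
  (fun x => if insub x is Some y then Some (f y) else None).
split; first exact: twins_iterS.
split; first by move=> x y; rewrite /add_false_twin Hb.
split.
  move=> x y; case: insubP => [a ax ea|nx]; case: insubP => [c cy ec|ny] //=.
  - by move=> [] /finj ac; rewrite -ea -ec ac.
  - by move: nx ny; rewrite !negbK => /eqP -> /eqP ->.
move=> x; case: insubP => [a ax ea|nx] /=.
  by rewrite Hpi /g' ea.
by rewrite Hpi /g' /=; move: nx; rewrite negbK => /eqP ->.
Qed.

Lemma twins_embed (W0 : finType) (a0 : rel W0) t (V : finType) (adj : rel V) (g : V -> W0) :
  (forall u v, adj u v -> a0 (g u) (g v)) ->
  (0 < #|V|)%N -> (#|V| <= #|g @: [set: V]| + t)%N ->
  exists (W : finType) (b : rel W), twins_iter a0 t b /\ subgraph_of adj b.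
Proof.
move=> Hg V0 Hc.
have [W [b [pi [f [Hti [Hb [finj Hpi]]]]]]] := @twins_embed_aux W0 a0 t V g V0 Hc.
exists W, b; split; first exact: Hti.
exists f; split; first exact: finj.
by move=> u v auv; rewrite Hb !Hpi; apply: Hg.
Qed.


Theorem mainTheorem12 (R : realType) (V : finType) (adj : rel V) :
  simple_graph adj -> (0 < #|V|)%N ->
  let n := #|V| in
  (CBU R adj <-> homogeneous_arc_labeling R adj) /\
  (homogeneous_arc_labeling R adj <->
     exists m t : nat, (m + t <= n + 1)%N /\
       exists (W : finType) (b : rel W),
         twins_iter (@shift_adj m) t b /\ subgraph_of adj b) /\
  ((exists m t : nat, (m + t <= n + 1)%N /\
       exists (W : finType) (b : rel W),
         twins_iter (@shift_adj m) t b /\ subgraph_of adj b) <->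
     dCBU R (2 * n - 1) adj).
Proof.
move=> Hsg V0 n.
have b_to_d : homogeneous_arc_labeling R adj -> dCBU R (2 * n - 1) adj.
  move=> /hal_intervals [inn [out [mu [Hio [Ht _]]]]].
  exact: (@int_to_dcbu R V adj inn out Hsg V0 Hio Ht).
have b_to_c : homogeneous_arc_labeling R adj ->
     exists m t : nat, (m + t <= n + 1)%N /\
       exists (W : finType) (b : rel W),
         twins_iter (@shift_adj m) t b /\ subgraph_of adj b.
  move=> /hal_intervals [inn [out [mu [Hio [Ht Hmu]]]]].
  have [m [g [Hg Hm]]] := @int_to_shift R V adj inn out mu Hio Ht Hmu.
  have Hi : (#|g @: [set: V]| <= n)%N by rewrite /n -cardsT; apply: leq_imset_card.
  exists m, (n - #|g @: [set: V]|)%N; split; first by move: Hm Hi; lia.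
  apply: (@twins_embed _ (@shift_adj m) _ V adj g Hg V0).
  by move: Hi; rewrite /n; lia.
have c_to_b' : (exists m t : nat, (m + t <= n + 1)%N /\
       exists (W : finType) (b : rel W),
         twins_iter (@shift_adj m) t b /\ subgraph_of adj b) ->
     homogeneous_arc_labeling R adj.
  move=> [m [t [_ [W [b [Hti Hsub]]]]]].
  exact: (@c_to_b R V adj m t W b Hsg Hti Hsub).
have d_to_a : dCBU R (2 * n - 1) adj -> CBU R adj.
  move=> H; exists (2 * n - 1)%N; split => //.
  by move: V0; rewrite /n; lia.
have a_to_b : CBU R adj -> homogeneous_arc_labeling R adj.
  exact: (@cbu_to_hal R V adj Hsg).
split; first by split => [/a_to_b|/b_to_d/d_to_a].
split; first by split => [/b_to_c|/c_to_b'].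
by split => [/c_to_b'/b_to_d|/d_to_a/a_to_b/b_to_c].
Qed.
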